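(* Let $G$ be an affine smooth finitely presented group scheme over a commutative ring $K$, let $R$ be a Noetherian $K$-algebra, $m\in\mathbb N$ and $s\in R$, and suppose that the restriction of the localization homomorphism $\lambda_s:R\to R_s$ to the ideal $s^mR$ is injective. Then for every $a\in G(R_s)$ there exists $k\in\mathbb N$ such that $[a,\lambda_s(b)]\in\lambda_s\bigl(G(R,s^mR)\bigr)$ for all $b\in G(R,s^kR)$.
   Context: $R_s$ is the localization of $R$ at the multiplicative set generated by $s$, and $\lambda_s$ also denotes the induced map $G(R)\to G(R_s)$. $G(R,\mathfrak q)=\ker(G(R)\to G(R/\mathfrak q))$. $[x,y]=x^{-1}y^{-1}xy$. *)

(* Defs.v *)
From HB Require Import structures.
From Stdlib Require Import List.
From mathcomp Require Import all_boot all_order all_algebra.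
Set Implicit Arguments. Unset Strict Implicit. Unset Printing Implicit Defensive.
Import GRing.Theory.
Local Open Scope ring_scope.

(* A "K-algebra" is a commutative (possibly zero) ring C together with a ring
   morphism iC : K -> C.  K-algebra morphisms are ring morphisms commuting
   with the structure maps. *)

Inductive pexpr (K : Type) : Type :=
| PVar of nat
| PC of K
| PAdd of pexpr K & pexpr K
| PMul of pexpr K & pexpr K
| PNeg of pexpr K.

Fixpoint peval (K : comPzRingType) (C : comPzRingType) (iC : {rmorphism K -> C})
    (e : nat -> C) (p : pexpr K) : C :=
  match p with
  | PVar k => e k
  | PC c => iC c
  | PAdd p q => peval iC e p + peval iC e q
  | PMul p q => peval iC e p * peval iC e q
  | PNeg p => - peval iC e p
  end.

(* Presentation of an affine finitely presented group scheme G over K: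
   G(C) = { x in C^n | r(x) = 0 for all r in grels },
   with multiplication, inverse and unit given by polynomials
   (gmul i uses variables X_0..X_{n-1} for the first factor and
    X_n..X_{2n-1} for the second factor). *)
Record fpgroup (K : comPzRingType) := FPGroup {
  gdim : nat;
  grels : seq (pexpr K);
  gmul : 'I_gdim -> pexpr K;
  ginv : 'I_gdim -> pexpr K;
  gone : 'I_gdim -> K
}.

Section Points.
Variables (K : comPzRingType) (G : fpgroup K).
Variables (C : comPzRingType) (iC : {rmorphism K -> C}).

Definition env1 (x : 'I_(gdim G) -> C) : nat -> C :=
  fun k => match insub k with Some i => x i | None => 0 end.
Definition env2 (x y : 'I_(gdim G) -> C) : nat -> C :=
  fun k => if (k < gdim G)%N then env1 x k else env1 y (k - gdim G)%N.

Definition is_point (x : 'I_(gdim G) -> C) : Prop :=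
  forall r, In r (grels G) -> peval iC (env1 x) r = 0.

Definition gmulP (x y : 'I_(gdim G) -> C) : 'I_(gdim G) -> C :=
  fun i => peval iC (env2 x y) (gmul i).
Definition ginvP (x : 'I_(gdim G) -> C) : 'I_(gdim G) -> C :=
  fun i => peval iC (env1 x) (ginv i).
Definition goneP : 'I_(gdim G) -> C := fun i => iC (gone i).

Definition peq (x y : 'I_(gdim G) -> C) : Prop := forall i, x i = y i.

Definition gcomm (x y : 'I_(gdim G) -> C) : 'I_(gdim G) -> C :=
  gmulP (gmulP (gmulP (ginvP x) (ginvP y)) x) y.

(* x lies in the principal congruence subgroup G(C, tC) = ker(G(C) -> G(C/tC)) *)
Definition in_cong (t : C) (x : 'I_(gdim G) -> C) : Prop :=
  is_point x /\ forall i, exists c, x i - goneP i = t * c.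
End Points.
Arguments env1 {K} G {C} x.
Arguments env2 {K} G {C} x y.
Arguments is_point {K} G {C} iC x.
Arguments gmulP {K} G {C} iC x y.
Arguments ginvP {K} G {C} iC x.
Arguments goneP {K} G {C} iC.
Arguments peq {K} G {C} x y.
Arguments gcomm {K} G {C} iC x y.
Arguments in_cong {K} G {C} iC t x.

Definition is_group_scheme (K : comPzRingType) (G : fpgroup K) : Prop :=
  forall (C : comPzRingType) (iC : {rmorphism K -> C}),
  [/\ is_point G iC (goneP G iC),
      (forall x y, is_point G iC x -> is_point G iC y ->
         is_point G iC (gmulP G iC x y))
    & (forall x, is_point G iC x -> is_point G iC (ginvP G iC x))] /\
  [/\
      (forall x y z, is_point G iC x -> is_point G iC y -> is_point G iC z ->
         peq G (gmulP G iC (gmulP G iC x y) z) (gmulP G iC x (gmulP G iC y z))),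
      (forall x, is_point G iC x ->
         peq G (gmulP G iC (goneP G iC) x) x /\ peq G (gmulP G iC x (goneP G iC)) x)
    & (forall x, is_point G iC x ->
         peq G (gmulP G iC (ginvP G iC x) x) (goneP G iC) /\
         peq G (gmulP G iC x (ginvP G iC x)) (goneP G iC))].

Definition is_ideal (C : comPzRingType) (I : C -> Prop) : Prop :=
  [/\ I 0, (forall a b, I a -> I b -> I (a + b)) & (forall r a, I a -> I (r * a))].

(* Smoothness (formal smoothness; finite presentation is built in):
   for every K-algebra C and every square-zero ideal I of C, every point of G
   with values in C/I lifts to a point with values in C.  A (C/I)-point is
   represented by a lift x : C^n with r(x) in I for all relations r. *)
Definition smooth_fpgroup (K : comPzRingType) (G : fpgroup K) : Prop :=
  forall (C : comPzRingType) (iC : {rmorphism K -> C}) (I : C -> Prop),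
    is_ideal I -> (forall a b, I a -> I b -> a * b = 0) ->
    forall x : 'I_(gdim G) -> C,
      (forall r, In r (grels G) -> I (peval iC (env1 G x) r)) ->
      exists y : 'I_(gdim G) -> C,
        is_point G iC y /\ forall i, I (y i - x i).

Definition noetherian (C : comPzRingType) : Prop :=
  forall I : nat -> C -> Prop,
    (forall n, is_ideal (I n)) ->
    (forall n a, I n a -> I n.+1 a) ->
    exists N, forall n, (N <= n)%N -> forall a, I n a -> I N a.

(* lam : R -> S is the localization of R at the multiplicative set {s^n}
   (characterization as in Mathlib's IsLocalization). *)
Definition is_localization_at (R S : comPzRingType) (lam : {rmorphism R -> S})
    (s : R) : Prop :=
  [/\ exists u, lam s * u = 1,
      (forall y, exists r n, y * lam s ^+ n = lam r)
    & (forall r, lam r = 0 -> exists k, s ^+ k * r = 0)].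

(* Main.v *)
Require Import Defs.
From HB Require Import structures.
From mathcomp Require Import all_boot all_order all_algebra ring.
From Stdlib Require Import List FunctionalExtensionality.
Import GRing.Theory.
Local Open Scope ring_scope.

Lemma uniformD n (P : 'I_n -> nat -> Prop) :
  (forall i D D', (D <= D')%N -> P i D -> P i D') ->
  (forall i, exists D, P i D) -> exists D, forall i, P i D.
Proof.
move=> mono H; have [f Hf] := fin_all_exists H.
exists (\max_i f i) => i; apply: (mono i (f i)) => //; exact: leq_bigmax.
Qed.

Section Pert.
Set Implicit Arguments.
Variables (K : comPzRingType) (R S : comPzRingType).
Variables (iR : {rmorphism K -> R}) (iS : {rmorphism K -> S}) (lam : {rmorphism R -> S}).
Variable s : R.
Hypothesis Hlam_alg : forall c, lam (iR c) = iS c.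

Definition Bd D (z : S) := exists r, z * lam s ^+ D = lam r.
Definition Sm k D (z : S) := exists r, z * lam s ^+ D = lam (s ^+ k * r).

Lemma Bd_mono {D D' z} : (D <= D')%N -> Bd D z -> Bd D' z.
Proof.
move=> le [r Hr]; exists (r * s ^+ (D' - D)).
by rewrite rmorphM rmorphXn -Hr -mulrA -exprD subnKC.
Qed.

Lemma Sm_mono {k D D' z} : (D <= D')%N -> Sm k D z -> Sm k D' z.
Proof.
move=> le [r Hr]; exists (r * s ^+ (D' - D)).
by rewrite mulrA rmorphM rmorphXn -Hr -mulrA -exprD subnKC.
Qed.

Lemma Sm0 k D : Sm k D 0.
Proof. by exists 0; rewrite mul0r mulr0 rmorph0. Qed.

Lemma pert {e0 : nat -> S} {d} (H0 : forall k, Bd d (e0 k)) p :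
  exists D, Bd D (peval iS e0 p) /\
   forall k e, (forall j, Sm k d (e j - e0 j)) ->
     Sm k D (peval iS e p - peval iS e0 p).
Proof.
elim: p => [j|c|p [D1 [B1 P1]] q [D2 [B2 P2]]|p [D1 [B1 P1]] q [D2 [B2 P2]]|p [D1 [B1 P1]]] /=.
- by exists d; split => // k e He; apply: He.
- exists 0%N; split; first by exists (iR c); rewrite expr0 mulr1 Hlam_alg.
  by move=> k e _; rewrite subrr; apply: Sm0.
- exists (D1 + D2)%N; split.
    have [r1 h1] := Bd_mono (leq_addr D2 D1) B1.
    have [r2 h2] := Bd_mono (leq_addl D1 D2) B2.
    by exists (r1 + r2); rewrite mulrDl h1 h2 rmorphD.
  move=> k e He.
  have [r1 h1] := Sm_mono (leq_addr D2 D1) (P1 k e He).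
  have [r2 h2] := Sm_mono (leq_addl D1 D2) (P2 k e He).
  exists (r1 + r2).
  have -> : peval iS e p + peval iS e q - (peval iS e0 p + peval iS e0 q) =
    (peval iS e p - peval iS e0 p) + (peval iS e q - peval iS e0 q) by ring.
  by rewrite mulrDl h1 h2 -rmorphD mulrDr.
- exists (D1 + D2)%N; split.
    have [r1 h1] := B1; have [r2 h2] := B2.
    by exists (r1 * r2); rewrite exprD mulrACA h1 h2 rmorphM.
  move=> k e He.
  have [a1 h1] := P1 k e He; have [a2 h2] := P2 k e He.
  have [b1 g1] := B1; have [b2 g2] := B2.
  set x := peval iS e0 p in h1 g1 *; set y := peval iS e0 q in h2 g2 *.
  set x' := peval iS e p in h1 *; set y' := peval iS e q in h2 *.
  exists (a1 * (s ^+ k * a2) + b1 * a2 + a1 * b2).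
  have -> : (x' * y' - x * y) * lam s ^+ (D1 + D2) =
    ((x' - x) * lam s ^+ D1) * ((y' - y) * lam s ^+ D2) +
    (x * lam s ^+ D1) * ((y' - y) * lam s ^+ D2) +
    ((x' - x) * lam s ^+ D1) * (y * lam s ^+ D2) by rewrite exprD; ring.
  rewrite h1 h2 g1 g2 -!rmorphM -!rmorphD; congr (lam _); ring.
- exists D1; split.
    by have [r h] := B1; exists (- r); rewrite mulNr h rmorphN.
  move=> k e He; have [r h] := P1 k e He; exists (- r).
  have -> : - peval iS e p - - peval iS e0 p = - (peval iS e p - peval iS e0 p) by ring.
  by rewrite mulNr h mulrN rmorphN.
Qed.

Variable G : fpgroup K.
Notation vec := ('I_(gdim G) -> S).
Definition VBd D (x : vec) := forall i, Bd D (x i).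
Definition VSm k D (x x0 : vec) := forall i, Sm k D (x i - x0 i).

Lemma VBd_mono {D D' x} : (D <= D')%N -> VBd D x -> VBd D' x.
Proof. by move=> le H i; apply: Bd_mono (H i). Qed.
Lemma VSm_mono {k D D' x y} : (D <= D')%N -> VSm k D x y -> VSm k D' x y.
Proof. by move=> le H i; apply: Sm_mono (H i). Qed.
Lemma VSm_refl k D x : VSm k D x x.
Proof. by move=> i; rewrite subrr; apply: Sm0. Qed.

Lemma env1_Bd {D x} : VBd D x -> forall k, Bd D (env1 G x k).
Proof.
move=> H k; rewrite /env1; case: insub => [i|]; first exact: H.
by exists 0; rewrite mul0r rmorph0.
Qed.
Lemma env1_Sm {k D x x0} : VSm k D x x0 -> forall j, Sm k D (env1 G x j - env1 G x0 j).
Proof.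
move=> H j; rewrite /env1; case: insub => [i|]; first exact: H.
by rewrite subrr; apply: Sm0.
Qed.
Lemma env2_Bd {D x y} : VBd D x -> VBd D y -> forall k, Bd D (env2 G x y k).
Proof. by move=> Hx Hy k; rewrite /env2; case: ifP => _; apply: env1_Bd. Qed.
Lemma env2_Sm {k D x x0 y y0} : VSm k D x x0 -> VSm k D y y0 ->
  forall j, Sm k D (env2 G x y j - env2 G x0 y0 j).
Proof. by move=> Hx Hy j; rewrite /env2; case: ifP => _; apply: env1_Sm. Qed.

Lemma fam_pert {e0 : nat -> S} {d} (H0 : forall k, Bd d (e0 k)) (f : 'I_(gdim G) -> pexpr K) :
  exists D, forall i, Bd D (peval iS e0 (f i)) /\
   forall k e, (forall j, Sm k d (e j - e0 j)) ->
     Sm k D (peval iS e (f i) - peval iS e0 (f i)).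
Proof.
apply: uniformD.
  move=> i D D' le [B P]; split; first exact: Bd_mono B.
  by move=> k e He; apply: Sm_mono (P k e He).
by move=> i; apply: pert.
Qed.

Lemma mulP_pert {d x0 y0} : VBd d x0 -> VBd d y0 -> exists D,
  VBd D (gmulP G iS x0 y0) /\ forall k x y, VSm k d x x0 -> VSm k d y y0 ->
    VSm k D (gmulP G iS x y) (gmulP G iS x0 y0).
Proof.
move=> Hx Hy; have [D HD] := fam_pert (env2_Bd Hx Hy) (@gmul _ G).
exists D; split; first by move=> i; case: (HD i).
move=> k x y Hx' Hy' i; case: (HD i) => _ P; apply: P; exact: env2_Sm.
Qed.

Lemma invP_pert {d x0} : VBd d x0 -> exists D,
  VBd D (ginvP G iS x0) /\ forall k x, VSm k d x x0 ->
    VSm k D (ginvP G iS x) (ginvP G iS x0).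
Proof.
move=> Hx; have [D HD] := fam_pert (env1_Bd Hx) (@ginv _ G).
exists D; split; first by move=> i; case: (HD i).
move=> k x Hx' i; case: (HD i) => _ P; apply: P; exact: env1_Sm.
Qed.

End Pert.

Lemma peval_div (K C : comPzRingType) (iC : {rmorphism K -> C}) (q : C) e e0 p :
  (forall k, exists c, e k - e0 k = q * c) ->
  exists c, peval iC e p - peval iC e0 p = q * c.
Proof.
move=> H; elim: p => [j|c|p [c1 h1] r [c2 h2]|p [c1 h1] r [c2 h2]|p [c1 h1]] /=.
- exact: H.
- by exists 0; rewrite subrr mulr0.
- exists (c1 + c2); rewrite mulrDr -h1 -h2; ring.
- exists (c1 * peval iC e r + peval iC e0 p * c2).
  have -> : peval iC e p * peval iC e r - peval iC e0 p * peval iC e0 r =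
    (peval iC e p - peval iC e0 p) * peval iC e r +
     peval iC e0 p * (peval iC e r - peval iC e0 r) by ring.
  rewrite h1 h2; ring.
- by exists (- c1); rewrite mulrN -h1; ring.
Qed.

Lemma peval_lam (K R S : comPzRingType) (iR : {rmorphism K -> R}) (iS : {rmorphism K -> S})
  (lam : {rmorphism R -> S}) (Hl : forall c, lam (iR c) = iS c) e p :
  lam (peval iR e p) = peval iS (fun k => lam (e k)) p.
Proof.
elim: p => [j|c|p h1 q h2|p h1 q h2|p h1] /=.
- by [].
- exact: Hl.
- by rewrite rmorphD h1 h2.
- by rewrite rmorphM h1 h2.
- by rewrite rmorphN h1.
Qed.

Lemma env1_lam (K R S : comPzRingType) (G : fpgroup K) (lam : {rmorphism R -> S}) x :
  (fun k => lam (env1 G x k)) = env1 G (fun i => lam (x i)).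
Proof.
apply: functional_extensionality => k; rewrite /env1; case: insub => //.
exact: rmorph0.
Qed.

Lemma peq_eq (K C : comPzRingType) (G : fpgroup K) (x y : 'I_(gdim G) -> C) :
  peq G x y -> x = y.
Proof. by move=> H; apply: functional_extensionality. Qed.

Theorem mainTheorem16
  (K : comPzRingType) (G : fpgroup K)
  (HG : is_group_scheme G) (Hsm : smooth_fpgroup G)
  (R : comPzRingType) (iR : {rmorphism K -> R}) (HR : noetherian R)
  (m : nat) (s : R)
  (S : comPzRingType) (iS : {rmorphism K -> S}) (lam : {rmorphism R -> S})
  (Hlam_alg : forall c, lam (iR c) = iS c)
  (Hloc : is_localization_at lam s)
  (Hinj : forall r : R, lam (s ^+ m * r) = 0 -> s ^+ m * r = 0) :
  forall a : 'I_(gdim G) -> S, is_point G iS a ->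
  exists k : nat,
    forall b : 'I_(gdim G) -> R, in_cong G iR (s ^+ k) b ->
    exists c : 'I_(gdim G) -> R,
      in_cong G iR (s ^+ m) c /\
      peq G (fun i => lam (c i)) (gcomm G iS a (fun i => lam (b i))).
Proof.
move=> a Ha.
have [[u Hu] Hfrac _] := Hloc.
have [da Hda] : exists da, VBd lam s G da a.
  apply: uniformD; first by move=> i D D' le; apply: Bd_mono.
  by move=> i; have [r [n Hn]] := Hfrac (a i); exists n, r.
set one := goneP G iS.
have Bone : VBd lam s G 0 one.
  by move=> i; exists (iR (gone i)); rewrite expr0 mulr1 Hlam_alg.
have [Du [Bu _]] := invP_pert iR iS Hlam_alg Hda.
have [D2 [B2 P2]] := invP_pert iR iS Hlam_alg Bone.
have [D3 [B3 P3]] := mulP_pert iR iS Hlam_alg (VBd_mono (leq_addr D2 Du) Bu)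
                                      (VBd_mono (leq_addl Du D2) B2).
have [D4 [B4 P4]] := mulP_pert iR iS Hlam_alg (VBd_mono (leq_addr da D3) B3)
                                      (VBd_mono (leq_addl D3 da) Hda).
have [D5 [B5 P5]] := mulP_pert iR iS Hlam_alg B4 (VBd_mono (leq0n D4) Bone).
exists (m + D5)%N => b [Hbp Hbc].
set y := fun i => lam (b i).
have Hy : VSm lam s G (m + D5) 0 y one.
  move=> i; have [c hc] := Hbc i; exists c.
  by rewrite expr0 mulr1 /y /one /goneP -Hlam_alg -rmorphB hc.
have H3 := P3 _ _ _ (VSm_refl _ _ _ _ _ _) (VSm_mono (leq_addl Du D2) (P2 _ _ Hy)).
have H4 := P4 _ _ _ (VSm_mono (leq_addr da D3) H3) (VSm_refl _ _ _ _ _ _).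
have Hg := P5 _ _ _ H4 (VSm_mono (leq0n D4) Hy).
have [[Pone PmulS PinvS] [Passoc Pid Pinv]] := HG S iS.
have Hypt : is_point G iS y.
  move=> r Hr; rewrite /y -env1_lam -(@peval_lam _ _ _ iR iS lam Hlam_alg).
  by rewrite (Hbp r Hr) rmorph0.
have Hcone : gcomm G iS a one = one.
  have Hinv1 : ginvP G iS one = one.
    have [_ h1] := Pinv one Pone.
    have [h2 _] := Pid (ginvP G iS one) (PinvS _ Pone).
    by apply: peq_eq => i; rewrite -(h2 i) (h1 i).
  rewrite /gcomm Hinv1.
  have [_ h1] := Pid _ (PinvS _ Ha); rewrite (peq_eq h1).
  have [h2 _] := Pinv _ Ha; rewrite (peq_eq h2).
  by have [_ h3] := Pid _ Pone; rewrite (peq_eq h3).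
have Hgpt : is_point G iS (gcomm G iS a y).
  exact: PmulS _ _ (PmulS _ _ (PmulS _ _ (PinvS _ Ha) (PinvS _ Hypt)) Ha) Hypt.
rewrite /gcomm in Hg; rewrite -/(gcomm G iS a y) -/(gcomm G iS a one) Hcone in Hg.
have tu : forall D (x z : S), x * lam s ^+ D = z * lam s ^+ D -> x = z.
  move=> D x z h; have: x * lam s ^+ D * u ^+ D = z * lam s ^+ D * u ^+ D by rewrite h.
  by rewrite -!mulrA -exprMn Hu expr1n !mulr1.
have [r Hr] : exists r : 'I_(gdim G) -> R,
    forall i, gcomm G iS a y i - one i = lam (s ^+ m * r i).
  have Hx : forall i, exists r0 : R, gcomm G iS a y i - one i = lam (s ^+ m * r0).
    move=> i; have [r hr] := Hg i; exists r; apply: (tu D5).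
    by rewrite hr -rmorphXn -rmorphM; congr (lam _); rewrite exprD; ring.
  exact: fin_all_exists Hx.
set c := fun i => iR (gone i) + s ^+ m * r i.
have Hlc : (fun i => lam (c i)) = gcomm G iS a y.
  apply: functional_extensionality => i.
  by rewrite /c rmorphD Hlam_alg -Hr /one /goneP; ring.
exists c; split; last by rewrite Hlc.
split; last first.
  by move=> i; exists (r i); rewrite /c /goneP; ring.
move=> rel Hrel.
have [[PoneR _ _] _] := HG R iR.
have [w Hw] : exists w, peval iR (env1 G c) rel - peval iR (env1 G (goneP G iR)) rel = s ^+ m * w.
  apply: peval_div => k; rewrite /env1; case: insub => [i|]; last by exists 0; rewrite subrr mulr0.
  by exists (r i); rewrite /c /goneP; ring.
move: Hw; rewrite (PoneR rel Hrel) subr0 => Hw.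
rewrite Hw; apply: Hinj; rewrite -Hw (@peval_lam _ _ _ iR iS lam Hlam_alg) env1_lam Hlc.
exact: Hgpt.
Qed.
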